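(* Let $\|\cdot\|$ be a strictly convex norm on $\mathbb{R}^n$ that is continuously differentiable on $\mathbb{R}^n\setminus\{0\}$, with gradient $N(x)$ at $x\neq0$; set $h(x,y)=\|y\|-\langle y,N(x)\rangle$ for $x\ne0$ and $\sigma(x,t)=\max_{\|y\|\le t}h(x,x+y)$ for $x\ne 0$, $t>0$. Assume $\|\cdot\|$ is geometrically convex with constants $1,\Lambda$, where $\Lambda>2$, i.e. $\Lambda h(x,x+y)\le h(x,x+2y)$ whenever $x\ne 0$ and $\|y\|\le\|x\|$. Let $l_0,l_1,\bar l_0,\bar l_1\in\mathbb{R}^n$ satisfy $$\|l_1-\bar l_0\|\ge\|l_1-l_0\|,\quad \|\bar l_1-l_0\|\ge\|\bar l_1-\bar l_0\|,\quad \|l_1-l_0\|=\|\bar l_1-\bar l_0\|=1,$$ and let $l=[l_0,l_1]$, $\bar l=[\bar l_0,\bar l_1]$ denote the closed segments, $e=l_1-l_0$, $\bar e=\bar l_1-\bar l_0$. Assume $0<\delta<1/4$, $x_0\in\mathbb{R}^n$, and $$l\cap\bar B_\delta(x_0)\ne\emptyset,\qquad \bar l\cap \bar B_\delta(x_0)\neq\emptyset.$$ Assume moreover that $\rho>3\delta$, $l_1,l_0\notin\bar B_\rho(x_0)$, $\kappa\ge \frac{4}{\rho-3\delta}$, and $$\sigma(e,\kappa\delta)\le\sigma(\bar e,\kappa\delta).$$ Then $$h(\bar e,\bar l_1-l_0)+h(\bar e,l_1-\bar l_0)\le \frac{\Lambda}{\Lambda-2}\,\sigma(\bar e,\kapp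a\delta).$$
   Context: $\langle\cdot,\cdot\rangle$ is the Euclidean inner product; $\bar B_s(x_0)=\{x:\|x-x_0\|\le s\}$ is the closed ball in the norm $\|\cdot\|$. Strict convexity of the norm means: if $x,y\neq0$ and $\|x+y\|=\|x\|+\|y\|$, then $y=\alpha x$ for some $\alpha>0$. *)

(* Defs.v *)
From HB Require Import structures.
From mathcomp Require Import all_boot all_order all_algebra.
From mathcomp Require Import all_classical all_reals all_analysis.
Set Implicit Arguments. Unset Strict Implicit. Unset Printing Implicit Defensive.
Import Order.TTheory GRing.Theory Num.Theory.
Import numFieldNormedType.Exports.
Local Open Scope classical_set_scope.
Local Open Scope ring_scope.

Section Defs.
Variables (R : realType) (n : nat).
Notation V := 'rV[R]_n.

Definition dotp (u v : V) : R := \sum_(i < n) u ord0 i * v ord0 i.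

Definition is_norm (nrm : V -> R) : Prop :=
  [/\ forall x y, nrm (x + y) <= nrm x + nrm y,
      forall (a : R) x, nrm (a *: x) = `|a| * nrm x &
      forall x, nrm x = 0 -> x = 0].

Definition strictly_convex_norm (nrm : V -> R) : Prop :=
  forall x y, x != 0 -> y != 0 -> nrm (x + y) = nrm x + nrm y ->
    exists2 a : R, 0 < a & y = a *: x.

Definition C1_with_gradient (nrm : V -> R) (N : V -> V) : Prop :=
  (forall x, x != 0 ->
     differentiable nrm x /\ forall v, 'd nrm x v = dotp v (N x)) /\
  {in [set x : V | x != 0], continuous N}.

Definition hfun (nrm : V -> R) (N : V -> V) (x y : V) : R :=
  nrm y - dotp y (N x).

(* sigma(x,t) = max_{||y|| <= t} h(x, x+y)  (the max exists by compactness,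
   so it equals the supremum) *)
Definition sigmafun (nrm : V -> R) (N : V -> V) (x : V) (t : R) : R :=
  sup [set hfun nrm N x (x + y) | y in [set y : V | nrm y <= t]].

Definition geom_convex (nrm : V -> R) (N : V -> V) (Lam : R) : Prop :=
  forall x y, x != 0 -> nrm y <= nrm x ->
    Lam * hfun nrm N x (x + y) <= hfun nrm N x (x + 2 *: y).

Definition seg_meets_ball (nrm : V -> R) (a b c : V) (r : R) : Prop :=
  exists2 t : R, 0 <= t <= 1 & nrm ((1 - t) *: a + t *: b - c) <= r.

End Defs.

(* Main.v *)
Require Import Defs.
From HB Require Import structures.
From mathcomp Require Import all_boot all_order all_algebra.
From mathcomp Require Import all_classical all_reals all_analysis.
From mathcomp Require Import ring lra.
Import Order.TTheory GRing.Theory Num.Theory.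
Import numFieldNormedType.Exports.
Local Open Scope ring_scope.
Set Implicit Arguments. Unset Strict Implicit.
Section Basic.
Variables (R : realType) (n : nat).
Notation V := 'rV[R]_n.

Lemma dotD (u v w : V) : dotp (u + v) w = dotp u w + dotp v w.
Proof. by rewrite /dotp -big_split; apply: eq_bigr => i _; rewrite mxE mulrDl. Qed.
Lemma dotZ (a : R) (u w : V) : dotp (a *: u) w = a * dotp u w.
Proof. by rewrite /dotp mulr_sumr; apply: eq_bigr => i _; rewrite mxE mulrA. Qed.
Lemma dotN (u w : V) : dotp (- u) w = - dotp u w.
Proof. by rewrite -scaleN1r dotZ mulN1r. Qed.
Lemma dotB (u v w : V) : dotp (u - v) w = dotp u w - dotp v w.
Proof. by rewrite dotD dotN. Qed.

Variable nrm : V -> R.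
Hypothesis Hn : is_norm nrm.

Lemma nrm0 : nrm 0 = 0.
Proof. by case: Hn => _ hom _; rewrite -(scale0r 0) hom normr0 mul0r. Qed.
Lemma nrmN x : nrm (- x) = nrm x.
Proof. by case: Hn => _ hom _; rewrite -scaleN1r hom normrN normr1 mul1r. Qed.
Lemma nrmZ a x : 0 <= a -> nrm (a *: x) = a * nrm x.
Proof. by case: Hn => _ hom _ a0; rewrite hom ger0_norm. Qed.
Lemma nrmD x y : nrm (x + y) <= nrm x + nrm y.
Proof. by case: Hn. Qed.
Lemma nrm_ge0 x : 0 <= nrm x.
Proof.
have := nrmD x (- x); rewrite subrr nrm0 nrmN.
lra.
Qed.

End Basic.

Lemma grad_ineq (R : realType) (n : nat) (nrm : 'rV[R]_n -> R) (N : 'rV[R]_n -> 'rV[R]_n)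
  (x v : 'rV[R]_n) :
  is_norm nrm -> C1_with_gradient nrm N -> x != 0 ->
  nrm x + dotp v (N x) <= nrm (x + v).
Proof.
move=> [tri hom _] [/(_ x) G _] x0; have [dx dE] := G x0.
rewrite -dE -deriveE // -lerBrDl.
have D := @diff_derivable _ _ _ _ _ v dx. rewrite /derive.
move: D; rewrite /derivable => D.
have K := @cvgr_to_le _ _ _ R _ _ (nrm (x+v) - nrm x) D. apply: K.
have H1 := @nbhs_dnbhs_neq R 0.
have H2 := @dnbhs0_lt R R 1 ltr01.
near=> h.
have hn0 : h != 0 by near: h.
have hlt : `|h| < 1 by near: h.
rewrite /= [h *: v + x]addrC.
rewrite /GRing.scale /=.
have [hpos|hneg] := ltrP 0 h.
  have e : x + h *: v = (1 - h) *: x + h *: (x + v).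
    by rewrite scalerDr scalerBl scale1r addrA subrK.
  rewrite e.
  have := tri ((1 - h) *: x) (h *: (x + v)).
  have h1 : 0 <= 1 - h by rewrite subr_ge0; move: hlt; rewrite ltr_norml => /andP[_ /ltW].
  rewrite !hom (ger0_norm h1) (ger0_norm (ltW hpos)) -e => T.
  rewrite ler_pdivrMl //; nra.
have e : (1 - h) *: x = (x + h *: v) + (- h) *: (x + v).
  by rewrite scaleNr scalerDr scalerBl scale1r opprD addrA addrAC addrK.
have := tri (x + h *: v) ((- h) *: (x + v)).
have h1 : 0 <= 1 - h by rewrite subr_ge0 (le_trans hneg) ?ler01.
have h2 : 0 <= - h by rewrite oppr_ge0.
rewrite -e !hom (ger0_norm h1) (ger0_norm h2) => T.
have hlt0 : h < 0 by rewrite lt_neqAle hn0 hneg.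
rewrite ler_ndivrMl //; nra.
Unshelve. all: by end_near.
Qed.

Section Grad.
Variables (R : realType) (n : nat).
Notation V := 'rV[R]_n.
Variables (nrm : V -> R) (N : V -> V).
Hypotheses (Hn : is_norm nrm) (HG : C1_with_gradient nrm N).

Lemma dself x : x != 0 -> dotp x (N x) = nrm x.
Proof.
move=> x0; apply/eqP; rewrite eq_le; apply/andP; split.
  have := @grad_ineq _ _ _ _ x x Hn HG x0.
  have -> : x + x = 2 *: x by rewrite scalerDl scale1r.
  by rewrite nrmZ //; lra.
have := @grad_ineq _ _ _ _ x (- x) Hn HG x0; rewrite subrr nrm0 // dotN; lra.
Qed.

Lemma dle x y : x != 0 -> dotp y (N x) <= nrm y.
Proof.
move=> x0; have := @grad_ineq _ _ _ _ x (y - x) Hn HG x0; rewrite [x + (y - x)]addrC subrK dotB dself //; lra.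
Qed.

Lemma dge x y : x != 0 -> - nrm y <= dotp y (N x).
Proof. move=> x0; have := dle (- y) x0; rewrite dotN nrmN //; lra. Qed.

Lemma unit_neq0 u : nrm u = 1 -> u != 0.
Proof. by move=> u1; apply/eqP => u0; move: u1; rewrite u0 nrm0 // => /eqP; rewrite eq_sym oner_eq0. Qed.

Lemma sig_ub (u y : V) (tau : R) : u != 0 -> nrm y <= tau ->
  hfun nrm N u (u + y) <= sigmafun nrm N u tau.
Proof.
move=> u0 yt; apply: ub_le_sup; last by exists y.
exists (2 * (nrm u + tau)) => _ [y' /= y't <-].
rewrite /hfun; have := dge (u + y') u0; have := nrmD Hn u y'; lra.
Qed.

Lemma hselfZ u c : nrm u = 1 -> 0 <= c -> hfun nrm N u (c *: u) = 0.
Proof.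
move=> u1 c0; rewrite /hfun nrmZ // dotZ dself ?unit_neq0 //; lra.
Qed.

Lemma star (Lam : R) (u W : V) (c : R) : geom_convex nrm N Lam ->
  nrm u = 1 -> 0 < c -> nrm (W - c *: u) <= 2 * c ->
  (Lam - 2) * hfun nrm N u W <= Lam * (c + nrm W - nrm (c *: u + W)).
Proof.
move=> GC u1 c0 Wc; have u0 := unit_neq0 u1.
have cn0 : c != 0 by rewrite gt_eqF.
set z := c^-1 *: W.
have Wz : W = c *: z by rewrite /z scalerA divff // scale1r.
clearbody z.
set y := 2^-1 *: (z - u).
have two0 : (2 : R) != 0 by rewrite pnatr_eq0.
have e2 : u + 2 *: y = z by rewrite /y scalerA divff // scale1r addrC subrK.
have e1 : c *: u + W = (2 * c) *: (u + y).
  rewrite Wz /y; apply/rowP => i; rewrite !mxE; field; by rewrite ?cn0 ?two0.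
have ny : nrm y <= nrm u.
  rewrite u1 /y nrmZ ?invr_ge0 ?ler0n //.
  have -> : z - u = c^-1 *: (W - c *: u) by rewrite Wz scalerBr !scalerA mulVf // !scale1r.
  have ci : 0 <= c^-1 by rewrite invr_ge0 ltW.
  rewrite nrmZ //.
  have := ler_wpM2l ci Wc; rewrite mulrCA mulVf // mulr1 => T; lra.
have G := GC u y u0 ny; rewrite e2 in G.
have c2 : 0 <= 2 * c by rewrite mulr_ge0 ?ler0n ?ltW.
move: G; rewrite /hfun e1 (nrmZ Hn _ c2).
rewrite Wz (nrmZ Hn _ (ltW c0)) !dotZ dotD dself // u1.
have -> : dotp y (N u) = 2^-1 * (dotp z (N u) - 1).
  by rewrite /y dotZ dotB dself // u1.
move=> G.
have G' := ler_wpM2l (ltW c0) G.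
nra.
Qed.

Lemma small (Lam tau r c : R) (u w : V) : geom_convex nrm N Lam -> 0 < Lam ->
  nrm u = 1 -> 0 < c -> 0 < r -> r <= 1 -> 2 * r <= tau -> nrm w <= c * r ->
  Lam * hfun nrm N u (c *: u + w) * r <= nrm w * sigmafun nrm N u tau.
Proof.
move=> GC L0 u1 c0 r0 r1 rt wcr; have u0 := unit_neq0 u1.
have [->|w0] := eqVneq w 0.
  by rewrite addr0 hselfZ ?(ltW c0) // (nrm0 Hn) mulr0 !mul0r.
have nw0 : 0 < nrm w.
  rewrite lt_def (nrm_ge0 Hn) andbT; apply/eqP => nw; case: Hn => _ _ /(_ _ nw) w00.
  by move: w0; rewrite w00 eqxx.
set z := (r / nrm w) *: w.
have nz : nrm z = r by rewrite /z nrmZ ?divr_ge0 ?ltW // mulrAC -mulrA divff ?mulr1 // gt_eqF.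
set lam := nrm w / (c * r).
have lam0 : 0 <= lam by rewrite /lam divr_ge0 ?mulr_ge0 ?ltW.
have lam1 : lam <= 1 by rewrite /lam ler_pdivrMr ?mulr_gt0 // mul1r.
have ew : c *: u + w = c *: (u + lam *: z).
  have cn : c != 0 by rewrite gt_eqF.
  have rn : r != 0 by rewrite gt_eqF.
  have wn : nrm w != 0 by rewrite gt_eqF.
  rewrite /z /lam; apply/rowP => i; rewrite !mxE; field.
  by rewrite cn rn wn.
clearbody z.
have hc : hfun nrm N u (c *: u + w) = c * hfun nrm N u (u + lam *: z).
  by rewrite ew /hfun nrmZ ?ltW // dotZ mulrBr.
have conv : hfun nrm N u (u + lam *: z) <= lam * hfun nrm N u (u + z).
  have e : u + lam *: z = lam *: (u + z) + (1 - lam) *: u.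
    by apply/rowP => i; rewrite !mxE; ring.
  rewrite /hfun e; have := nrmD Hn (lam *: (u + z)) ((1 - lam) *: u).
  rewrite !nrmZ ?subr_ge0 // u1 !dotD !dotZ !dself // u1.
  rewrite dotD dself // u1.
  move=> T; nra.
have nzu : nrm z <= nrm u by rewrite nz u1.
have G := GC u z u0 nzu.
have Su : hfun nrm N u (u + 2 *: z) <= sigmafun nrm N u tau.
  by apply: sig_ub => //; rewrite nrmZ ?ler0n // nz.
have cl : c * lam * r = nrm w.
  have cn : c != 0 by rewrite gt_eqF.
  have rn : r != 0 by rewrite gt_eqF.
  by rewrite /lam; field; rewrite cn rn.
rewrite hc.
have H0 : 0 <= hfun nrm N u (u + z) by rewrite /hfun; have := dle (u + z) u0; lra.
have LcR : 0 <= Lam * c * r by rewrite !mulr_ge0 ?ltW.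
have S1 := ler_wpM2l LcR conv.
have nwg : 0 <= nrm w by apply: nrm_ge0.
have S2 := ler_wpM2l nwg (le_trans G Su).
have E1 : Lam * (c * hfun nrm N u (u + lam *: z)) * r = Lam * c * r * hfun nrm N u (u + lam *: z) by ring.
rewrite E1; apply: (le_trans S1).
have E2 : Lam * c * r * (lam * hfun nrm N u (u + z)) = c * lam * r * (Lam * hfun nrm N u (u + z)) by ring.
by rewrite E2 cl.
Qed.

Lemma wterm (Lam : R) (u W a : V) (k al m : R) : geom_convex nrm N Lam -> 2 < Lam ->
  nrm u = 1 -> 0 < k -> 0 < m -> m <= 1 -> W = k *: u + a -> 1 <= nrm W ->
  nrm a = (1 - k) + al -> (1 - 2 * k + al) * m <= k ->
  (Lam - 2) * hfun nrm N u W * m <= Lam * al.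
Proof.
move=> GC L2 u1 k0 m0 m1 EW W1 na cond.
have W0 : W != 0 by apply/eqP => W0; move: W1; rewrite W0 nrm0 // ler10.
have u0 := unit_neq0 u1.
set c := k / m.
have c0 : 0 < c by rewrite /c divr_gt0.
have cm : c * m = k by rewrite /c divfK // gt_eqF.
have ck : k <= c by rewrite /c ler_pdivlMr //; nra.
have cond' : 1 - 2 * k + al <= c by rewrite -(ler_pM2r m0) cm.
have nWc : nrm (W - c *: u) <= 2 * c.
  have -> : W - c *: u = a - (c - k) *: u.
    by rewrite EW; apply/rowP => i; rewrite !mxE; ring.
  have := nrmD Hn a (- ((c - k) *: u)); rewrite nrmN // nrmZ ?subr_ge0 // u1; lra.
have St := star GC u1 c0 nWc.
have g1 := @grad_ineq _ _ _ _ W (c *: u) Hn HG W0.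
have g2 := @grad_ineq _ _ _ _ W (- (k *: u)) Hn HG W0.
move: g1 g2; rewrite dotN !dotZ [W + c *: u]addrC.
have -> : W + - (k *: u) = a by rewrite EW [k *: u + a]addrC addrK.
rewrite na => g1 g2.
set h := hfun nrm N u W in St *.
set d := dotp u (N W) in g1 g2.
have X : Lam * (c + nrm W - nrm (c *: u + W)) * m <= Lam * (k * (1 - d)).
  rewrite -mulrA ler_pM2l ?(lt_trans _ L2) //; rewrite -cm; nra.
have Y : Lam * (k * (1 - d)) <= Lam * al by rewrite ler_pM2l ?(lt_trans _ L2) //; nra.
have Z : (Lam - 2) * h * m <= Lam * (c + nrm W - nrm (c *: u + W)) * m by rewrite ler_pM2r.
lra.
Qed.
End Grad.

Lemma cond1_lem (R : realType) (t al be m : R) : 0 <= al -> 0 <= be -> al + be <= 2 * m ->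
  (m = t /\ t <= 1/2) \/ (m = 1 - t /\ 1/2 <= t) -> 0 <= t <= 1 ->
  (1 - 2 * (1 - t) + al) * m <= 1 - t.
Proof.
move=> a0 b0 ab [[mE th]|[mE th]] /andP[t0 t1]; rewrite mE in ab *.
  have h1 : (1 - 2 * (1 - t) + al) * t <= (4 * t - 1) * t by rewrite ler_wpM2r //; lra.
  have h2 : (4 * t - 1) * t <= 1 - t by nra.
  lra.
have h1 : (1 - 2 * (1 - t) + al) <= 1 by lra.
have h3 : 0 <= 1 - t by lra.
have := ler_wpM2r h3 h1; lra.
Qed.

Lemma cond2_lem (R : realType) (t al be m : R) : 0 <= al -> 0 <= be -> al + be <= 2 * m ->
  (m = t /\ t <= 1/2) \/ (m = 1 - t /\ 1/2 <= t) -> 0 <= t <= 1 ->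
  (1 - 2 * t + be) * m <= t.
Proof.
move=> a0 b0 ab [[mE th]|[mE th]] /andP[t0 t1]; rewrite mE in ab *.
  have h1 : (1 - 2 * t + be) <= 1 by lra.
  have := ler_wpM2r t0 h1; lra.
have h1 : (1 - 2 * t + be) * (1 - t) <= (3 - 4 * t) * (1 - t) by rewrite ler_wpM2r //; lra.
have h2 : (3 - 4 * t) * (1 - t) <= t by nra.
lra.
Qed.

Lemma fin1 (R : realType) (Lam A Eq H S : R) : 2 < Lam -> A <= Eq + H -> H <= 2 -> 0 <= Eq ->
  Lam * Eq <= S -> Lam < S -> (Lam - 2) * A <= Lam * S.
Proof.
move=> L2 AH H2 E0 ES LS.
have h1 : (Lam - 2) * A <= (Lam - 2) * (Eq + 2) by rewrite ler_wpM2l; lra.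
have h2 : (Lam - 1) * Lam <= (Lam - 1) * S by rewrite ler_wpM2l; lra.
nra.
Qed.

Lemma fin2 (R : realType) (Lam A Eq H S : R) : 2 < Lam -> A <= Eq + H -> H <= S -> 0 <= Eq ->
  Lam * Eq <= S -> 0 <= S -> (Lam - 2) * A <= Lam * S.
Proof.
move=> L2 AH H2 E0 ES S0.
have h1 : (Lam - 2) * A <= (Lam - 2) * (Eq + S) by rewrite ler_wpM2l; lra.
nra.
Qed.

Lemma core (R : realType) (Lam delta rho tau s t om na nb nW1 nW2 de h1 h2 hea heb S Se : R) :
  2 < Lam -> 0 < delta -> delta < 1/4 -> 3 * delta < rho ->
  4 * delta <= tau * (rho - 3 * delta) -> 0 < tau ->
  rho - delta < s -> rho - delta < 1 - s -> 0 <= t -> t <= 1 ->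
  0 <= om -> om <= 2 * delta ->
  1 <= nW1 -> 1 <= nW2 -> nW1 <= (1 - t) + s + om -> nW2 <= (1 - s) + t + om ->
  nW1 <= 1 - t + na -> nW2 <= t + nb ->
  h1 + h2 = nW1 + nW2 - 1 - de -> - 1 <= de ->
  na + nb - 1 = hea + heb ->
  (forall r, 0 < r -> r <= 1 -> 2 * r <= tau -> om <= s * r -> Lam * hea * r <= om * Se) ->
  (forall r, 0 < r -> r <= 1 -> 2 * r <= tau -> om <= (1 - s) * r -> Lam * heb * r <= om * Se) ->
  0 <= S -> 0 <= Se -> Se <= S ->
  (2 <= tau -> 1 - de <= S) ->
  (forall m, 0 < 1 - t -> 0 < m -> m <= 1 -> (1 - 2 * (1 - t) + (na - t)) * m <= 1 - t ->
     (Lam - 2) * h1 * m <= Lam * (na - t)) ->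
  (forall m, 0 < t -> 0 < m -> m <= 1 -> (1 - 2 * t + (nb - (1 - t))) * m <= t ->
     (Lam - 2) * h2 * m <= Lam * (nb - (1 - t))) ->
  (Lam - 2) * (h1 + h2) <= Lam * S.
Proof.
move=> L2 d0 d4 r3 tk tau0 s_lo s_hi t0 t1 om0 omd C1 C2 hW1 hW2 Wa Wb AE Hle2 EqE
  Sa Sb S0 Se0 Ssig HS W1f W2f.
have tlo : rho - delta - om < t by clear -C2 hW2 s_lo; lra.
have thi : rho - delta - om < 1 - t by clear -C1 hW1 s_hi; lra.
have al0 : 0 <= na - t by clear -C1 Wa; lra.
have be0 : 0 <= nb - (1 - t) by clear -C2 Wb; lra.
have AH : h1 + h2 <= (na + nb - 1) + (1 - de) by clear -AE Wa Wb; lra.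
have Hle : 1 - de <= 2 by clear -Hle2; lra.
have L0 : 0 < Lam by clear -L2; lra.
have sp : 0 < s by clear -s_lo r3 d0; lra.
have sp' : 0 < 1 - s by clear -s_hi r3 d0; lra.
have rd : 0 < rho - 3 * delta by clear -r3; lra.
set Eq := na + nb - 1 in AH EqE.
have Eq0 : 0 <= Eq by rewrite /Eq; clear -al0 be0; lra.
have [tau2|tau2] := lerP tau 2.
  have r0 : 0 < tau / 2 by rewrite divr_gt0.
  have r1 : tau / 2 <= 1 by rewrite ler_pdivrMr //; clear -tau2; lra.
  have r2 : 2 * (tau / 2) <= tau by rewrite mulrC divfK.
  have ws : om <= s * (tau / 2).
    have : (rho - 3 * delta) * tau <= s * tau by rewrite ler_pM2r //; clear -s_lo d0; lra.
    clear -tk omd; rewrite mulrC in tk; lra.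
  have ws' : om <= (1 - s) * (tau / 2).
    have : (rho - 3 * delta) * tau <= (1 - s) * tau by rewrite ler_pM2r //; clear -s_hi d0; lra.
    clear -tk omd; rewrite mulrC in tk; lra.
  have ha := Sa _ r0 r1 r2 ws.
  have hb := Sb _ r0 r1 r2 ws'.
  have EqB : Lam * Eq * tau <= 4 * om * Se.
    have -> : Lam * Eq * tau = 2 * (Lam * hea * (tau / 2) + Lam * heb * (tau / 2)) by rewrite EqE; field.
    clear -ha hb; lra.
  have [m [mt mt' mor]] : exists m, [/\ m <= t, m <= 1 - t &
      (m = t /\ t <= 1/2) \/ (m = 1 - t /\ 1/2 <= t)].
    have [th|th] := lerP t (1/2).
      by exists t; split => //; [clear -th; lra | left].
    by exists (1 - t); split => //; [clear -th; lra | right; split => //; clear -th; lra].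
  have mlo : rho - 3 * delta <= m by case: mor => [[-> _]|[-> _]]; clear -tlo thi omd; lra.
  have m0 : 0 < m by clear -mlo rd; lra.
  have m1 : m <= 1 by clear -mt t1; lra.
  have mh : m <= 1/2 by clear -mt mt'; lra.
  have tm : 2 * om <= tau * m.
    have : tau * (rho - 3 * delta) <= tau * m by rewrite ler_pM2l.
    clear -tk omd; lra.
  have EqM : Lam * Eq <= 2 * m * Se.
    have T1 : 4 * om * Se <= (2 * (tau * m)) * Se by rewrite ler_wpM2r //; clear -tm; lra.
    have T2 : Lam * Eq * tau <= (2 * m * Se) * tau.
      apply: (le_trans EqB); apply: (le_trans T1); rewrite le_eqVlt; apply/orP; left; apply/eqP; ring.
    by move: T2; rewrite ler_pM2r.
  have [SeL|SeL] := lerP Se Lam.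
    have Eqm : Eq <= 2 * m.
      have T : 2 * m * Se <= 2 * m * Lam by rewrite ler_pM2l //; clear -m0; lra.
      have := le_trans EqM T; rewrite [_ * Lam]mulrC ler_pM2l //.
    have k1 : 0 < 1 - t by clear -thi r3 omd; lra.
    have k2 : 0 < t by clear -tlo r3 omd; lra.
    have ab2 : (na - t) + (nb - (1 - t)) <= 2 * m by rewrite /Eq in Eqm; clear -Eqm; lra.
    have tt : 0 <= t <= 1 by rewrite t0 t1.
    have cond1 := @cond1_lem _ _ _ _ _ al0 be0 ab2 mor tt.
    have cond2 := @cond2_lem _ _ _ _ _ al0 be0 ab2 mor tt.
    have w1 := W1f _ k1 m0 m1 cond1.
    have w2 := W2f _ k2 m0 m1 cond2.
    have T : (Lam - 2) * (h1 + h2) * m <= (2 * Se) * m.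
      have -> : 2 * Se * m = 2 * m * Se by ring.
      apply: le_trans EqM.
      have -> : Lam * Eq = Lam * (na - t) + Lam * (nb - (1 - t)) by rewrite /Eq; ring.
      have -> : (Lam - 2) * (h1 + h2) * m = (Lam - 2) * h1 * m + (Lam - 2) * h2 * m by ring.
      clear -w1 w2; lra.
    move: T; rewrite ler_pM2r // => T.
    have T2 : 2 * S <= Lam * S by rewrite ler_wpM2r //; clear -L2; lra.
    clear -T T2 Ssig; lra.
  have ES : Lam * Eq <= S.
    have T : 2 * m * Se <= 1 * Se by rewrite ler_wpM2r //; clear -mh; lra.
    clear -T EqM Ssig; lra.
  apply: (@fin1 _ Lam (h1 + h2) Eq (1 - de) S L2 AH Hle Eq0 ES); clear -SeL Ssig; lra.
have r0 : (0:R) < 1 by [].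
have r1 : (1:R) <= 1 by [].
have r2 : 2 * 1 <= tau by rewrite mulr1 ltW.
have ws : om <= s * 1 by rewrite mulr1; clear -s_lo omd r3; lra.
have ws' : om <= (1 - s) * 1 by rewrite mulr1; clear -s_hi omd r3; lra.
have ha := Sa _ r0 r1 r2 ws.
have hb := Sb _ r0 r1 r2 ws'.
rewrite !mulr1 in ha hb.
have EqB : Lam * Eq <= 2 * om * Se by rewrite EqE; clear -ha hb; lra.
have ES : Lam * Eq <= S.
  have T : 2 * om * Se <= 1 * Se by rewrite ler_wpM2r //; clear -omd d4; lra.
  clear -T EqB Ssig; lra.
have HS' := HS (ltW tau2).
exact: (@fin2 _ Lam (h1 + h2) Eq (1 - de) S L2 AH HS' Eq0 ES S0).
Qed.

Lemma final_div (R : realType) (Lam A S : R) : 2 < Lam -> (Lam - 2) * A <= Lam * S ->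
  A <= Lam / (Lam - 2) * S.
Proof.
move=> L2 H; have L0 : 0 < Lam - 2 by rewrite subr_gt0.
by rewrite mulrAC ler_pdivlMr // mulrC.
Qed.

Unset Implicit Arguments.

Theorem theorem5p1 (R : realType) (n : nat) (nrm : 'rV[R]_n -> R)
  (N : 'rV[R]_n -> 'rV[R]_n) (Lam : R)
  (l0 l1 bl0 bl1 x0 : 'rV[R]_n) (delta rho kappa : R) :
  is_norm nrm -> strictly_convex_norm nrm -> C1_with_gradient nrm N ->
  2 < Lam -> geom_convex nrm N Lam ->
  nrm (l1 - bl0) >= nrm (l1 - l0) ->
  nrm (bl1 - l0) >= nrm (bl1 - bl0) ->
  nrm (l1 - l0) = 1 -> nrm (bl1 - bl0) = 1 ->
  0 < delta < 1 / 4 ->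
  seg_meets_ball nrm l0 l1 x0 delta ->
  seg_meets_ball nrm bl0 bl1 x0 delta ->
  3 * delta < rho ->
  rho < nrm (l1 - x0) -> rho < nrm (l0 - x0) ->
  4 / (rho - 3 * delta) <= kappa ->
  sigmafun nrm N (l1 - l0) (kappa * delta) <=
    sigmafun nrm N (bl1 - bl0) (kappa * delta) ->
  hfun nrm N (bl1 - bl0) (bl1 - l0) + hfun nrm N (bl1 - bl0) (l1 - bl0)
    <= Lam / (Lam - 2) * sigmafun nrm N (bl1 - bl0) (kappa * delta).
Proof.
move=> Hn _ HG L2 GC C2 C1 ne neb /andP[d0 d4] [s /andP[s0 s1] hp] [t /andP[t0 t1] hq]
  r3 rl1 rl0 kap Ssig.
apply: final_div => //.
set e := l1 - l0 in ne C2 Ssig *.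
set eb := bl1 - bl0 in neb C1 Ssig *.
set tau := kappa * delta in Ssig *.
set S := sigmafun nrm N eb tau in Ssig *.
set Se := sigmafun nrm N e tau in Ssig.
set p := (1 - s) *: l0 + s *: l1 in hp.
set q := (1 - t) *: bl0 + t *: bl1 in hq.
set w := q - p.
set a := q - l0. set b := l1 - q.
set W1 := bl1 - l0 in C1 *. set W2 := l1 - bl0 in C2 *.
have e0 := unit_neq0 Hn ne. have eb0 := unit_neq0 Hn neb.
have Ea : a = s *: e + w by rewrite /a /w /p /e; apply/rowP => i; rewrite !mxE; ring.
have Eb : b = (1 - s) *: e + (- w) by rewrite /b /w /p /e; apply/rowP => i; rewrite !mxE; ring.
have EW1 : W1 = (1 - t) *: eb + a by rewrite /W1 /a /q /eb; apply/rowP => i; rewrite !mxE; ring.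
have EW2 : W2 = t *: eb + b by rewrite /W2 /b /q /eb; apply/rowP => i; rewrite !mxE; ring.
have Eab : a + b = e by rewrite /a /b /e; apply/rowP => i; rewrite !mxE; ring.
have El0 : l0 - x0 = - (s *: e) + (p - x0) by rewrite /p /e; apply/rowP => i; rewrite !mxE; ring.
have El1 : l1 - x0 = (1 - s) *: e + (p - x0) by rewrite /p /e; apply/rowP => i; rewrite !mxE; ring.
have Ew : w = (q - x0) - (p - x0) by rewrite /w; apply/rowP => i; rewrite !mxE; ring.
have EW1' : W1 = (1 - t) *: eb + (s *: e + w) by rewrite EW1 Ea.
have EW2' : W2 = ((1 - s) *: e + t *: eb) - w by rewrite EW2 Eb; apply/rowP => i; rewrite !mxE; ring.
have s_lo : rho - delta < s.
  have := nrmD Hn (- (s *: e)) (p - x0); rewrite -El0 (nrmN Hn) (nrmZ Hn) // ne.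
  by clear -hp rl0; lra.
have s_hi : rho - delta < 1 - s.
  have := nrmD Hn ((1 - s) *: e) (p - x0); rewrite -El1 (nrmZ Hn) ?subr_ge0 // ne.
  by clear -hp rl1; lra.
have omd : nrm w <= 2 * delta.
  have := nrmD Hn (q - x0) (- (p - x0)); rewrite -Ew (nrmN Hn).
  by clear -hp hq; lra.
have om0 : 0 <= nrm w by apply: nrm_ge0.
have nW1 : nrm W1 <= (1 - t) + s + nrm w.
  have := nrmD Hn ((1 - t) *: eb) (s *: e + w); have := nrmD Hn (s *: e) w.
  rewrite -EW1' !(nrmZ Hn) ?subr_ge0 // ne neb.
  by move=> X Y; clear -X Y; lra.
have nW2 : nrm W2 <= (1 - s) + t + nrm w.
  have := nrmD Hn ((1 - s) *: e + t *: eb) (- w); have := nrmD Hn ((1 - s) *: e) (t *: eb).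
  rewrite -EW2' !(nrmZ Hn) ?subr_ge0 // (nrmN Hn) ne neb.
  by move=> X Y; clear -X Y; lra.
have Wa : nrm W1 <= 1 - t + nrm a.
  by have := nrmD Hn ((1 - t) *: eb) a; rewrite -EW1 (nrmZ Hn) ?subr_ge0 // neb mulr1.
have Wb : nrm W2 <= t + nrm b.
  by have := nrmD Hn (t *: eb) b; rewrite -EW2 (nrmZ Hn) // neb mulr1.
have dEb := dself Hn HG eb0; rewrite neb in dEb.
have dE := dself Hn HG e0; rewrite ne in dE.
have dsum : dotp a (N eb) + dotp b (N eb) = dotp e (N eb) by rewrite -dotD Eab.
have dsume : dotp a (N e) + dotp b (N e) = 1 by rewrite -dotD Eab.
have dW1 : dotp W1 (N eb) = (1 - t) + dotp a (N eb) by rewrite EW1 dotD dotZ dEb mulr1.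
have dW2 : dotp W2 (N eb) = t + dotp b (N eb) by rewrite EW2 dotD dotZ dEb mulr1.
have Hle2 : - 1 <= dotp e (N eb) by have := dge Hn HG e eb0; rewrite ne.
have rd : 0 < rho - 3 * delta by clear -r3; lra.
have k4 : 4 <= kappa * (rho - 3 * delta) by rewrite -ler_pdivrMr.
have k0 : 0 < kappa.
  have : 0 < 4 / (rho - 3 * delta) by rewrite divr_gt0.
  by move=> X; apply: lt_le_trans X kap.
have tau0 : 0 < tau by rewrite /tau mulr_gt0.
have tk : 4 * delta <= tau * (rho - 3 * delta).
  have X := ler_wpM2r (ltW d0) k4.
  apply: (le_trans X); rewrite /tau le_eqVlt; apply/orP; left; apply/eqP; ring.
have z0 : nrm (0 : 'rV[R]_n) <= tau by rewrite nrm0 // ltW.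
have S0 : 0 <= S.
  by have := sig_ub Hn HG eb0 z0; rewrite addr0 -[X in hfun _ _ _ X](scale1r eb) hselfZ ?ler01.
have Se0 : 0 <= Se.
  by have := sig_ub Hn HG e0 z0; rewrite addr0 -[X in hfun _ _ _ X](scale1r e) hselfZ ?ler01.
have AE : hfun nrm N eb W1 + hfun nrm N eb W2 = nrm W1 + nrm W2 - 1 - dotp e (N eb).
  by rewrite /hfun dW1 dW2 -dsum; ring.
have EqE : nrm a + nrm b - 1 = hfun nrm N e (s *: e + w) + hfun nrm N e ((1 - s) *: e + - w).
  by rewrite -Ea -Eb /hfun -dsume; ring.
have L0 : 0 < Lam by clear -L2; lra.
have Sa : forall r, 0 < r -> r <= 1 -> 2 * r <= tau -> nrm w <= s * r ->
    Lam * hfun nrm N e (s *: e + w) * r <= nrm w * Se.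
  move=> r r0 r1 r2 ws; have sp : 0 < s by clear -s_lo r3 d0; lra.
  exact: (small Hn HG GC L0 ne sp r0 r1 r2 ws).
have Sb : forall r, 0 < r -> r <= 1 -> 2 * r <= tau -> nrm w <= (1 - s) * r ->
    Lam * hfun nrm N e ((1 - s) *: e + - w) * r <= nrm w * Se.
  move=> r r0 r1 r2 ws; have sp : 0 < 1 - s by clear -s_hi r3 d0; lra.
  rewrite -(nrmN Hn w) in ws *.
  exact: (small Hn HG GC L0 ne sp r0 r1 r2 ws).
have HS : 2 <= tau -> 1 - dotp e (N eb) <= S.
  move=> t2.
  have ned : nrm (e - eb) <= tau.
    have := nrmD Hn e (- eb); rewrite (nrmN Hn) ne neb => X.
    by clear -X t2; lra.
  have := sig_ub Hn HG eb0 ned; rewrite [eb + _]addrC subrK /hfun ne.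
  done.
have C1' : 1 <= nrm W1 by rewrite -neb.
have C2' : 1 <= nrm W2 by rewrite -ne.
have W1f : forall m, 0 < 1 - t -> 0 < m -> m <= 1 ->
    (1 - 2 * (1 - t) + (nrm a - t)) * m <= 1 - t ->
    (Lam - 2) * hfun nrm N eb W1 * m <= Lam * (nrm a - t).
  move=> m k1 m0 m1 cond.
  have na : nrm a = (1 - (1 - t)) + (nrm a - t) by ring.
  exact: (wterm Hn HG GC L2 neb k1 m0 m1 EW1 C1' na cond).
have W2f : forall m, 0 < t -> 0 < m -> m <= 1 ->
    (1 - 2 * t + (nrm b - (1 - t))) * m <= t ->
    (Lam - 2) * hfun nrm N eb W2 * m <= Lam * (nrm b - (1 - t)).
  move=> m k2 m0 m1 cond.
  have nb : nrm b = (1 - t) + (nrm b - (1 - t)) by ring.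
  exact: (wterm Hn HG GC L2 neb k2 m0 m1 EW2 C2' nb cond).
exact: (core L2 d0 d4 r3 tk tau0 s_lo s_hi t0 t1 om0 omd C1' C2' nW1 nW2 Wa Wb AE Hle2 EqE
  Sa Sb S0 Se0 Ssig HS W1f W2f).
Qed.
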